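(* Let $X,Y,\tilde X,\tilde Y$ be cellular spaces with $X$ and $\tilde X$ compact, let $r\ge0$, let $k\colon\tilde X\to X$ and $h\colon Y\to\tilde Y$ be maps, and let $a,b\colon X\to Y$ be maps with $a\overset{r}{\approx}b$. Then $a\circ k\overset{r}{\approx}b\circ k$ (as maps $\tilde X\to Y$) and $h\circ a\overset{r}{\approx}h\circ b$ (as maps $X\to\tilde Y$).
   Context: Cellular space = based CW complex; maps based. Strong similarity: $\langle W\rangle$ = free abelian group on a set $W$. $Y^X$ = based maps (compact-open), based at the constant map; $Y^X_a$ = path component of $a$; $V\mapsto V|_R$ restriction; $\mathcal F_n(X)$ = finite $R\subseteq X$ containing the basepoint with $|R|\le n+1$; $\langle Y^X\rangle^{(s)}=\{V:V|_R=0\ \forall R\in\mathcal F_{s-1}(X)\}$. For unbased $U,V$: $V^{(U)}$ = unbased maps; $\Xi^U(v)$ = constant map at $v$; for $U=\coprod_iU_i$ the combining product $\boxed{\sqcup}_i\langle w_i\rangle=\langle w\rangle$, $w|_{U_i}=w_i$, multilinear. For nonempty finite $E$: simplex $\Delta E$, faces $\Delta F$; layouts = sets $A$ of pairwise disjoint nonempty subsets; $\Delta[A]=\coprod_{F\in A}\Delta F$; $S\in\langle V^{(\Delta E)}\rangle$ fissile if $S|_{\Delta[A]}=\boxed{\sqcup}_{F\in A}S|_{\Delta F}$ for all layouts. $U\wr X=(U\times X)/(U\times\{x_0\})$, $\#^X(w)(u\wr x)=w(u)(x)$, $\langle (Y^X)^{(U)}\rangle^{(s)}_X=\langle\#^X\rangle^{-1}\langle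 Y^{U\wr X}\rangle^{(s)}$. $a\overset{r}{\approx}b$ iff for each nonempty finite $E$ there is a fissile $S\in\langle (Y^X_a)^{(\Delta E)}\rangle$ with $\langle\Xi^{\Delta E}(b)\rangle-S\in\langle (Y^X)^{(\Delta E)}\rangle^{(r+1)}_X$. *)

(* Defs.v *)
From HB Require Import structures.
From mathcomp Require Import all_boot all_order all_algebra.
From mathcomp Require Import all_classical all_reals all_analysis.
From mathcomp Require Import Rstruct Rstruct_topology.
From Stdlib Require Import List.

Set Implicit Arguments.
Unset Strict Implicit.
Unset Printing Implicit Defensive.
Import Order.TTheory GRing.Theory Num.Theory.
Local Open Scope classical_set_scope.
Local Open Scope ring_scope.

Definition RR := Rdefinitions.R.

(** Free abelian groups: an element of <W> (W : set T) is a finitely supported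
    coefficient function T -> int whose support lies in W. *)
Definition fsupp (T : Type) (c : T -> int) : set T := [set w | c w != 0].
Definition in_free (T : Type) (W : set T) (c : T -> int) : Prop :=
  finite_set (fsupp c) /\ fsupp c `<=` W.
Definition gen (T : Type) (w : T) : T -> int :=
  fun v => if `[< v = w >] then 1 else 0.
Definition push (T T' : Type) (f : T -> T') (c : T -> int) : T' -> int :=
  fun v => \sum_(w \in [set w : {classic T} | f w = v]) c w.

Definition bmaps (X Y : ptopologicalType) : set (X -> Y) :=
  [set f | continuous f /\ f point = point].

Definition pcomp (X Y : ptopologicalType) (a : X -> Y) : set (X -> Y) :=
  [set f | bmaps f /\ exists g : RR -> {compact-open, X -> Y},
      {within [set t : RR | 0 <= t <= 1], continuous g} /\
      (forall t, 0 <= t <= 1 -> bmaps (g t : X -> Y)) /\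
      (g 0 : X -> Y) = a /\ (g 1 : X -> Y) = f].

Definition simplex (E : finType) : set {ptws E -> RR} :=
  [set t | (forall i, 0 <= t i) /\ \sum_(i : E) t i = 1].
Definition face (E : finType) (F : {set E}) : set {ptws E -> RR} :=
  [set t | simplex t /\ forall i, i \notin F -> t i = 0].
Definition layout (E : finType) (A : {set {set E}}) : Prop :=
  (forall F, F \in A -> F != finset.set0) /\
  (forall F G, F \in A -> G \in A -> F != G -> (F :&: G)%SET == finset.set0).
(** Delta[A] = coproduct of the faces Delta F, F in A; since these faces are
    pairwise disjoint closed subsets of Delta E, we realise it as their union. *)
Definition layout_space (E : finType) (A : {set {set E}}) : set {ptws E -> RR} :=
  \bigcup_(F in [set F | F \in A]) face F.

(** Unbased maps U -> V, for U a subspace of a space D and V a subspace of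
    Y^X; a map is represented by a function D -> (X -> Y) normalised to the
    constant based map outside U. *)
Definition dflt (X Y : ptopologicalType) : X -> Y := fun _ => point.
Definition restrU (D : Type) (X Y : ptopologicalType) (U : set D)
    (w : D -> (X -> Y)) : D -> (X -> Y) :=
  fun t => if `[< U t >] then w t else @dflt X Y.
Definition umaps (D : topologicalType) (X Y : ptopologicalType) (U : set D)
    (V : set (X -> Y)) : set (D -> (X -> Y)) :=
  [set w | {within U, continuous (fun t => (w t : {compact-open, X -> Y}))} /\
           (forall t, U t -> V (w t)) /\
           (forall t, ~ U t -> w t = @dflt X Y)].
Definition Xi (D : Type) (X Y : ptopologicalType) (U : set D) (v : X -> Y) :
  D -> (X -> Y) := restrU U (fun _ => v).

(** the combining product of the family (P F)_{F in A}, P F in <V^(Delta F)>,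
    extended multilinearly from  [+]_F <w_F> = <w>, w|_{Delta F} = w_F. *)
Definition glue (E : finType) (X Y : ptopologicalType) (A : {set {set E}})
    (tup : {set E} -> ({ptws E -> RR} -> (X -> Y))) : {ptws E -> RR} -> (X -> Y) :=
  fun t => if `[< exists F, F \in A /\ face F t >]
           then tup (xget finset.set0 [set F | F \in A /\ face F t]) t
           else @dflt X Y.
Definition comb (E : finType) (X Y : ptopologicalType) (A : {set {set E}})
    (P : {set E} -> ({ptws E -> RR} -> (X -> Y)) -> int) :
    ({ptws E -> RR} -> (X -> Y)) -> int :=
  fun g => \sum_(tup \in [set tup : {classic ({set E} -> ({ptws E -> RR} -> (X -> Y)))} |
                  (forall F, F \notin A -> tup F = (fun _ => @dflt X Y)) /\
                  glue A tup = g])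
             \prod_(F in A) P F (tup F).
Definition fissile (E : finType) (X Y : ptopologicalType)
    (S : ({ptws E -> RR} -> (X -> Y)) -> int) : Prop :=
  forall A : {set {set E}}, layout A ->
    push (restrU (layout_space A)) S = comb A (fun F => push (restrU (face F)) S).

(** U wr X = (U x X)/(U x {x0}): its points are the basepoint (None) and the
    classes Some (u, x) with u in U and x <> x0 (singleton classes). *)
Definition wr_pts (D : Type) (X : ptopologicalType) (U : set D) : set (option (D * X)) :=
  [set None] `|` [set Some p | p in [set p : D * X | U p.1 /\ p.2 != point]].
Definition sharp (D : Type) (X Y : ptopologicalType) (w : D -> (X -> Y)) :
    option (D * X) -> Y :=
  fun z => match z with None => point | Some p => w p.1 p.2 end.
Definition Fn (D : Type) (X : ptopologicalType) (n : nat) (U : set D) :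
    set (set (option (D * X))) :=
  [set R | R `<=` wr_pts U /\ R None /\
           exists s : list (option (D * X)), (size s <= n.+1)%N /\ R = [set z | List.In z s]].
Definition restrZ (Z : Type) (Y : ptopologicalType) (R : set Z) (g : Z -> Y) : Z -> Y :=
  fun z => if `[< R z >] then g z else point.
(** membership in <(Y^X)^(U)>^(s)_X = <#^X>^{-1} <Y^(U wr X)>^(s) *)
Definition in_filt (D : topologicalType) (X Y : ptopologicalType) (s : nat)
    (U : set D) (V : (D -> (X -> Y)) -> int) : Prop :=
  in_free (umaps U (@bmaps X Y)) V /\
  forall R, @Fn D X s.-1 U R -> push (fun w => restrZ R (sharp w)) V = (fun _ => 0).

Definition r_approx (X Y : ptopologicalType) (r : nat) (a b : X -> Y) : Prop :=
  forall E : finType, (0 < #|E|)%N ->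
    exists S : ({ptws E -> RR} -> (X -> Y)) -> int,
      in_free (umaps (@simplex E) (pcomp a)) S /\ fissile S /\
      in_filt r.+1 (@simplex E) (fun w => gen (Xi (@simplex E) b) w - S w).

(** Cellular spaces = based CW complexes (Whitehead's definition via
    characteristic maps  phi_i : D^(dim i) -> X). *)
Definition cdisk (n : nat) : set 'rV[RR]_n :=
  [set v | \sum_(i < n) (v ord0 i) ^+ 2 <= 1].
Definition odisk (n : nat) : set 'rV[RR]_n :=
  [set v | \sum_(i < n) (v ord0 i) ^+ 2 < 1].
Definition sphere (n : nat) : set 'rV[RR]_n :=
  [set v | \sum_(i < n) (v ord0 i) ^+ 2 = 1].

Definition cellular (X : ptopologicalType) : Prop :=
  hausdorff_space X /\
  exists (I : Type) (dim : I -> nat) (phi : forall i, 'rV[RR]_(dim i) -> X),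
    (forall i, {within @cdisk (dim i), continuous (phi i)}) /\
    (forall i u v, @odisk (dim i) u -> @odisk (dim i) v -> phi i u = phi i v -> u = v) /\
    (forall x : X, exists i u, @odisk (dim i) u /\ phi i u = x) /\
    (forall i j u v, @odisk (dim i) u -> @odisk (dim j) v -> phi i u = phi j v -> i = j) /\
    (forall i, exists J : set I, finite_set J /\ (forall j, J j -> (dim j < dim i)%N) /\
       forall u, @sphere (dim i) u ->
         exists j v, J j /\ @odisk (dim j) v /\ phi j v = phi i u) /\
    (forall A : set X, (forall i, closed (@cdisk (dim i) `&` phi i @^-1` A)) -> closed A) /\
    (exists i, dim i = 0%N /\ forall u, phi i u = point).

(* Main.v *)
Require Import Defs.
From HB Require Import structures.
From mathcomp Require Import all_boot all_order all_algebra.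
From mathcomp Require Import all_classical all_reals all_analysis.
From mathcomp Require Import Rstruct Rstruct_topology.
Require Import Defs.
Set Implicit Arguments.
Unset Strict Implicit.
Unset Printing Implicit Defensive.
Import Order.TTheory GRing.Theory Num.Theory.

Section Infra.
Local Open Scope classical_set_scope.
Local Open Scope ring_scope.

Lemma pushE (T T' : Type) (f : T -> T') (c : T -> int) (s : seq {classic T}) :
  uniq s -> (forall w, c w != 0 -> w \in s) ->
  forall v, push f c v = \sum_(w <- s) (if `[< f w = v >] then c w else 0).
Proof.
move=> us cs v; rewrite /push fsbig_mkcond fsbig_supp (fsbig_fwiden s) //.
- move=> w [_ /=]; rewrite /patch; case: ifPn => // _ /eqP; exact: cs.
- move=> w [_ /= H]; apply: contra_notP H => H; split => //.
Qed.


Definition cov (T : Type) (c : T -> int) (s : seq {classic T}) :=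
  uniq s /\ (forall w, c w != 0 -> w \in s).

Lemma fin_cov (T : Type) (c : T -> int) :
  finite_set (fsupp c) -> exists s, cov c s.
Proof.
move=> fc; exists (finmap.enum_fset (fset_set (fsupp c : set {classic T}))); split; first exact: finmap.fset_uniq.
move=> w cw; have := @in_fset_set {classic T} (fsupp c) fc w. move=> /= ->; rewrite inE; exact: cw.
Qed.

Lemma cov_fin (T : Type) (c : T -> int) s : cov c s -> finite_set (fsupp c).
Proof.
move=> [_ cs]; apply: (sub_finite_set _ (finite_seq s)).
by move=> w /= /cs ws.
Qed.

Lemma sum_cov_eq (T : eqType) (H : T -> int) (r1 r2 : seq T) :
  uniq r1 -> uniq r2 -> (forall w, H w != 0 -> w \in r1) ->
  (forall w, H w != 0 -> w \in r2) ->
  \sum_(w <- r1) H w = \sum_(w <- r2) H w.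
Proof.
move=> u1 u2 c1 c2.
have e1 : \sum_(w <- r1) H w = \sum_(w <- r1 | w \in r2) H w.
  rewrite [RHS]big_mkcond /=; apply: eq_bigr => w _; case: ifPn => // wn.
  by apply/eqP; apply: contraNT wn; exact: c2.
have e2 : \sum_(w <- r2) H w = \sum_(w <- r2 | w \in r1) H w.
  rewrite [RHS]big_mkcond /=; apply: eq_bigr => w _; case: ifPn => // wn.
  by apply/eqP; apply: contraNT wn; exact: c1.
rewrite e1 e2 -[LHS]big_filter -[RHS]big_filter; apply: perm_big; apply: uniq_perm.
- exact: filter_uniq.
- exact: filter_uniq.
by move=> w; rewrite !mem_filter andbC.
Qed.


Lemma sum_nz (T : eqType) (F : T -> int) (s : seq T) :
  \sum_(w <- s) F w != 0 -> exists2 w, w \in s & F w != 0.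
Proof.
elim: s => [|x s IH]; first by rewrite big_nil eqxx.
rewrite big_cons; case: (eqVneq (F x) 0) => [Fx|Fx] H; last by exists x => //; rewrite mem_head.
rewrite Fx add0r in H; case: (IH H) => w ws Fw; by exists w => //; rewrite in_cons ws orbT.
Qed.

Lemma push_nz (T T' : Type) (f : T -> T') (c : T -> int) s v :
  cov c s -> push f c v != 0 -> exists w, [/\ w \in s, f w = v & c w != 0].
Proof.
move=> [us cs]; rewrite (pushE f us cs) => /sum_nz [w ws].
case: ifPn => [/asboolP fw cw|]; last by rewrite eqxx.
by exists w; split.
Qed.

Lemma push_cov (T T' : Type) (f : T -> T') (c : T -> int) s :
  cov c s -> cov (push f c) (undup [seq (f w : {classic T'}) | w <- s]).
Proof.
move=> cs; split; first exact: undup_uniq.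
move=> v /(push_nz cs) [w [ws fw _]]; rewrite (@mem_undup {classic T'}); apply/(@mapP {classic T} {classic T'}); exists w => //.
Qed.

Lemma push_ext (T T' : Type) (f g : T -> T') (c : T -> int) :
  finite_set (fsupp c) -> (forall w, c w != 0 -> f w = g w) -> push f c = push g c.
Proof.
move=> /fin_cov [s [us cs]] fg; apply/funext => v.
rewrite (pushE f us cs) (pushE g us cs); apply: eq_bigr => w _.
by case: (eqVneq (c w) 0) => [->|/fg ->]; rewrite ?if_same.
Qed.

Lemma push_comp (T T' T'' : Type) (f : T -> T') (g : T' -> T'') (c : T -> int) :
  finite_set (fsupp c) -> push g (push f c) = push (g \o f) c.
Proof.
move=> /fin_cov [s cs]; have [us ccs] := cs.
have [us' ccs'] := push_cov f cs.
apply/funext => u; rewrite (pushE _ us' ccs') (pushE _ us ccs) -big_mkcond /=.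
under eq_bigr => v _ do rewrite (pushE f us ccs).
rewrite exchange_big /=; apply: eq_big_seq => w ws.
rewrite big_mkcond /= (bigD1_seq (f w : {classic T'})) //=; last first.
  by rewrite (@mem_undup {classic T'}); apply/(@mapP {classic T} {classic T'}); exists w.
rewrite big1 ?addr0; first by rewrite (asboolT (erefl (f w))).
move=> v vn; case: ifP => // _; case: asboolP => // fv.
by rewrite fv eqxx in vn.
Qed.

Lemma push_gen_sub (T T' : Type) (f : T -> T') (x : T) (c : T -> int) :
  finite_set (fsupp c) ->
  push f (fun w => gen x w - c w) = fun v => gen (f x) v - push f c v.
Proof.
move=> /fin_cov [s [us cs]].
set s' := undup ((x : {classic T}) :: s).
have us' : uniq s' by exact: undup_uniq.
have cs' : forall w, c w != 0 -> w \in s'.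
  by move=> w /cs ws; rewrite (@mem_undup {classic T}) in_cons ws orbT.
have cd : forall w, gen x w - c w != 0 -> w \in s'.
  move=> w; rewrite (@mem_undup {classic T}) in_cons; case: (@eqVneq {classic T} w x) => //= wx.
  rewrite /gen asboolF /=; last by move=> wxe; move: wx; rewrite wxe eqxx.
  by rewrite sub0r oppr_eq0 => /cs.
apply/funext => v; rewrite (pushE f us' cd) (pushE f us' cs').
rewrite (eq_bigr (fun w => (if `[< f w = v >] then gen x w else 0) - (if `[< f w = v >] then c w else 0))); last by move=> w _; case: ifP; rewrite ?subr0.
rewrite sumrB; congr (_ - _); rewrite (bigD1_seq (x : {classic T})) //=; last by rewrite (@mem_undup {classic T}) mem_head.
rewrite big1 ?addr0.
  rewrite /gen (asboolT (erefl x)); case: (asboolP (f x = v)) => [->|H].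
    by rewrite (asboolT (erefl v)).
  by rewrite asboolF // => e; apply: H; rewrite e.
move=> w wx; case: ifP => // _; rewrite /gen; case: asboolP => // wxe.
by move: wx; rewrite wxe eqxx.
Qed.

Lemma push0 (T T' : Type) (f : T -> T') : push f (fun _ : T => 0) = fun _ => 0.
Proof. by apply/funext => v; rewrite /push fsbig1. Qed.

Lemma in_free_push (T T' : Type) (f : T -> T') (c : T -> int) (W : set T) (W' : set T') :
  in_free W c -> (forall w, W w -> W' (f w)) -> in_free W' (push f c).
Proof.
move=> [fc cW] fW; have [s cs] := fin_cov fc.
have [us' cs'] := push_cov f cs; split.
  by apply: (sub_finite_set _ (finite_seq (undup [seq (f w : {classic T'}) | w <- s]))) => v /= /cs'.
move=> v /= /(push_nz cs) [w [_ <- cw]]; exact/fW/cW.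
Qed.

Lemma in_free_fin (T : Type) (W : set T) c : in_free W c -> finite_set (fsupp c).
Proof. by case. Qed.


Section Geo.
Variables (E : finType) (X Y : ptopologicalType).
Local Notation D := {ptws E -> RR}.
Local Notation M := (D -> (X -> Y)).
Local Notation d := (fun _ : D => @dflt X Y).

Lemma restrUK (U : set D) (w : M) : restrU U (restrU U w) = restrU U w.
Proof. by apply/funext => t; rewrite /restrU; case: asboolP. Qed.

Lemma push_restr_nz (U : set D) (S : M -> int) v :
  push (restrU U) S v != 0 -> restrU U v = v.
Proof.
have [//|Hn] := pselect (restrU U v = v).
rewrite /push fsbig1 ?eqxx // => w /= Hw.
by exfalso; apply: Hn; rewrite -Hw restrUK.
Qed.

Lemma face_uniq (A : {set {set E}}) F G t :
  layout A -> F \in A -> G \in A -> face F t -> face G t -> F = G.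
Proof.
move=> [_ dis] FA GA [[t0 t1] tF] [_ tG]; apply/eqP; apply: contraT => FG.
have := dis F G FA GA FG => /eqP I0.
have : \sum_(i : E) t i = 0.
  apply: big1 => i _; case: (boolP (i \in F)) => iF; last exact: tF.
  apply: tG; apply/negP => iG.
  have : i \in (F :&: G)%SET by rewrite finset.in_setI iF iG.
  by rewrite I0 finset.in_set0.
by rewrite t1 => /eqP; rewrite oner_eq0.
Qed.

Lemma layoutE (A : {set {set E}}) t :
  layout_space A t <-> exists F, F \in A /\ face F t.
Proof.
split; first by case=> F /= FA Ft; exists F.
by case=> F [FA Ft]; exists F.
Qed.

Lemma glue_norm (A : {set {set E}}) (tup : {set E} -> M) :
  restrU (layout_space A) (glue A tup) = glue A tup.
Proof.
apply/funext => t; rewrite /restrU /glue; case: asboolP => // H.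
case: asboolP => // H'; exfalso; apply: H; exact/layoutE.
Qed.

Lemma restr_glue (A : {set {set E}}) (tup : {set E} -> M) F :
  layout A -> F \in A -> restrU (face F) (tup F) = tup F ->
  restrU (face F) (glue A tup) = tup F.
Proof.
move=> lA FA tF; apply/funext => t; rewrite /restrU /glue.
case: asboolP => Ft; last by rewrite -tF /restrU asboolF.
rewrite asboolT; last by exists F.
congr (tup _ t); apply: xget_unique; first by split.
by move=> G [GA Gt]; exact: (face_uniq lA GA FA Gt Ft).
Qed.

Lemma norm_eq (A : {set {set E}}) (g1 g2 : M) :
  restrU (layout_space A) g1 = g1 -> restrU (layout_space A) g2 = g2 ->
  (forall F, F \in A -> restrU (face F) g1 = restrU (face F) g2) -> g1 = g2.
Proof.
move=> n1 n2 e; rewrite -n1 -n2; apply/funext => t; rewrite /restrU.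
case: asboolP => // /layoutE [F [FA Ft]].
have := congr1 (fun g => g t) (e F FA); rewrite /restrU asboolT //.
Qed.


Lemma comb_formula (A : {set {set E}}) (S : M -> int) (g : M) :
  layout A ->
  comb A (fun F => push (restrU (face F)) S) g =
  if `[< restrU (layout_space A) g = g >]
  then \prod_(F in A) push (restrU (face F)) S (restrU (face F) g) else 0.
Proof.
move=> lA; set P := fun F => push (restrU (face F)) S.
set tup0 : {set E} -> M := fun F => if F \in A then restrU (face F) g else d.
set Tg := [set tup : {classic ({set E} -> M)} |
  (forall F, F \notin A -> tup F = d) /\ glue A tup = g].
set Q := fun tup : {set E} -> M => \prod_(F in A) P F (tup F).
have claim1 : forall tup, Tg tup -> Q tup != 0 -> tup = tup0.
  move=> tup [tA tg] Qn; apply/funext => F; rewrite /tup0; case: ifPn => FA; last exact: tA.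
  have PF : P F (tup F) != 0.
    by apply: contraNneq Qn => H; rewrite /Q (bigD1 F) //= H mul0r.
  have nF := push_restr_nz PF.
  by rewrite -tg restr_glue.
have Tg0 : Tg tup0 <-> restrU (layout_space A) g = g.
  split; first by case=> _ <-; rewrite glue_norm.
  move=> ng; split; first by move=> F /negbTE; rewrite /tup0 => ->.
  apply: norm_eq; [exact: glue_norm | exact: ng | ].
  by move=> F FA; rewrite restr_glue //; rewrite /tup0 FA ?restrUK.
have Q0 : Q tup0 = \prod_(F in A) P F (restrU (face F) g).
  by apply: eq_bigr => F FA; rewrite /tup0 FA.
rewrite /comb -/P -/Q -/Tg fsbig_supp.
case: (asboolP (restrU (layout_space A) g = g)) => ng.
  rewrite (fsbig_widen _ [set tup0]) ?fsbig_set1 ?Q0 //.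
    by move=> tup [Ttup /= /eqP Qn]; exact: claim1.
  move=> tup [/= -> H]; apply: contra_notP H => Qn; split => //; exact/Tg0.
rewrite fsbig1 // => tup [Ttup /eqP Qn]; exfalso; apply: ng; apply/Tg0.
by rewrite -(claim1 _ Ttup Qn).
Qed.
End Geo.

Section Expand.
Variables (I : eqType) (M : Type) (d : M).

Definition upd (tau : I -> M) (i : I) (w : M) : I -> M :=
  fun j => if j == i then w else tau j.

Fixpoint tups (l : seq I) (s : I -> seq {classic M}) : seq {classic (I -> M)} :=
  match l with
  | [::] => [:: (fun _ => d) : {classic (I -> M)}]
  | i :: l' => [seq (upd tau i w : {classic (I -> M)}) | w <- s i, tau <- tups l' s]
  end.

Lemma prod_expand (l : seq I) (s : I -> seq {classic M}) (G : I -> M -> int) :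
  uniq l ->
  \prod_(i <- l) \sum_(w <- s i) G i w =
  \sum_(tau <- tups l s) \prod_(i <- l) G i (tau i).
Proof.
elim: l => [|i l IH] /=; first by rewrite big_nil big_seq1 big_nil.
move=> /andP [il ul]; rewrite big_cons IH // big_distrl /=.
rewrite big_allpairs_dep /=; apply: eq_bigr => w _.
rewrite big_distrr /=; apply: eq_bigr => tau _.
rewrite big_cons /upd eqxx; congr (_ * _); apply: eq_big_seq => j jl.
by case: eqP => // ji; move: jl; rewrite ji (negbTE il).
Qed.

Lemma mem_tups (l : seq I) (s : I -> seq {classic M}) (tau : {classic (I -> M)}) :
  uniq l ->
  (tau \in tups l s) <->
  ((forall i, i \in l -> (tau i : {classic M}) \in s i) /\ (forall i, i \notin l -> tau i = d)).
Proof.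
elim: l tau => [|i l IH] tau /=.
  move=> _; rewrite inE; split; first by move=> /eqP ->.
  by case=> _ H; apply/eqP/funext => j; exact: H.
move=> /andP [il ul]; split.
  move=> /(@allpairsP {classic M} {classic (I -> M)} {classic (I -> M)}) [[w tau'] [/= ws /IH [] // H1 H2 ->]]; split.
    move=> j; rewrite in_cons /upd; case: eqP => [-> //|ji] /= jl; exact: H1.
  move=> j; rewrite in_cons negb_or /upd => /andP [ji jl]; rewrite (negbTE ji); exact: H2.
case=> H1 H2; apply/(@allpairsP {classic M} {classic (I -> M)} {classic (I -> M)}); exists ((tau i : {classic M}), (upd tau i d : {classic (I -> M)})); split => /=.
- by apply: H1; rewrite mem_head.
- apply/IH => //; split.
    move=> j jl; rewrite /upd; case: eqP => [ji|ji]; first by move: jl; rewrite ji (negbTE il).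
    by apply: H1; rewrite in_cons jl orbT.
  move=> j jl; rewrite /upd; case: eqP => // ji; apply: H2.
  by rewrite in_cons negb_or jl andbT; apply/eqP.
- by apply/funext => j; rewrite /upd; case: eqP => // ->.
Qed.

Lemma uniq_tups (l : seq I) (s : I -> seq {classic M}) :
  uniq l -> (forall i, uniq (s i)) -> uniq (tups l s).
Proof.
elim: l => [|i l IH] //= /andP [il ul] us.
apply: (@allpairs_uniq {classic M} {classic (I -> M)} {classic (I -> M)}) => //; first exact: IH.
move=> [w tau] [w' tau'] /(@allpairsP {classic M} {classic (I -> M)} _) [[w1 t1] [/= _ t1in [-> ->]]].
move=> /(@allpairsP {classic M} {classic (I -> M)} _) [[w2 t2] [/= _ t2in [-> ->]]] /= E.
have /(mem_tups _ _ ul) [_ h1] := t1in.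
have /(mem_tups _ _ ul) [_ h2] := t2in.
have ew : w1 = w2 by have := congr1 (fun f => f i) E; rewrite /upd eqxx.
rewrite ew; congr (_, _); apply/funext => j.
have := congr1 (fun f => f j) E; rewrite /upd; case: eqP => [-> _|//].
by rewrite h1 ?h2.
Qed.
End Expand.

Lemma prod_if (I : eqType) (C : I -> Prop) (x : I -> int) (l : seq I) :
  \prod_(i <- l) (if `[< C i >] then x i else 0) =
  if `[< forall i, i \in l -> C i >] then \prod_(i <- l) x i else 0.
Proof.
elim: l => [|i l IH]; first by rewrite !big_nil asboolT.
rewrite !big_cons IH; case: (asboolP (C i)) => Ci.
  case: (asboolP (forall j, j \in l -> C j)) => H.
    by rewrite asboolT // => j; rewrite in_cons => /orP [/eqP ->|/H].
  by rewrite asboolF ?mulr0 // => H'; apply: H => j jl; apply: H'; rewrite in_cons jl orbT.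
by rewrite mul0r asboolF // => H'; apply: Ci; apply: H'; rewrite mem_head.
Qed.

Lemma glue_tup0 (E : finType) (X Y : ptopologicalType) (A : {set {set E}})
  (g : {ptws E -> RR} -> (X -> Y)) :
  layout A -> restrU (layout_space A) g = g ->
  glue A (fun F => if F \in A then restrU (face F) g else (fun _ => @dflt X Y)) = g.
Proof.
move=> lA ng; apply: norm_eq; [exact: glue_norm | exact: ng | ].
by move=> F FA; rewrite restr_glue // FA ?restrUK.
Qed.

Section Transfer.
Variables (E : finType) (X Y X' Y' : ptopologicalType).
Variable (m : (X -> Y) -> (X' -> Y')).
Hypothesis md : m (@dflt X Y) = @dflt X' Y'.
Local Notation D := {ptws E -> RR}.
Local Notation M := (D -> (X -> Y)).
Local Notation M' := (D -> (X' -> Y')).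
Definition Fm (w : M) : M' := fun t => m (w t).

Lemma Fm_restr (U : set D) (w : M) : restrU U (Fm w) = Fm (restrU U w).
Proof. by apply/funext => t; rewrite /restrU /Fm; case: asboolP => _ //; rewrite md. Qed.

Lemma Fm_Xi (U : set D) (v : X -> Y) : Fm (Xi U v) = Xi U (m v).
Proof. by apply/funext => t; rewrite /Xi /restrU /Fm; case: asboolP => _ //; rewrite md. Qed.

Lemma fin_push (T T' : Type) (f : T -> T') (c : T -> int) :
  finite_set (fsupp c) -> finite_set (fsupp (push f c)).
Proof. by move=> /fin_cov [s cs]; exact: (cov_fin (push_cov f cs)). Qed.

Lemma push_swap (U : set D) (S : M -> int) : finite_set (fsupp S) ->
  push (restrU U) (push Fm S) = push Fm (push (restrU U) S).
Proof.
move=> fS; rewrite !push_comp //.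
congr push; apply/funext => w /=; exact: Fm_restr.
Qed.

Theorem fissile_push (S : M -> int) :
  finite_set (fsupp S) -> fissile S -> fissile (push Fm S).
Proof.
move=> fS fisS A lA; apply/funext => g'.
set P := fun F => push (restrU (face F)) S.
have fP : forall F, finite_set (fsupp (P F)) by move=> F; exact: fin_push.
have P'E : forall F, push (restrU (face F)) (push Fm S) = push Fm (P F).
  by move=> F; rewrite push_swap.
set SL := push (restrU (layout_space A)) S.
have SLE : forall g, SL g = if `[< restrU (layout_space A) g = g >]
    then \prod_(F in A) P F (restrU (face F) g) else 0.
  by move=> g; rewrite /SL (fisS A lA) comb_formula.
have [sL [usL csL]] := fin_cov (fin_push (restrU (layout_space A)) fS).
rewrite comb_formula // push_swap // -/SL (pushE Fm usL csL).
case: (asboolP (restrU (layout_space A) g' = g')) => ng'; last first.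
  rewrite big1 // => g _; case: asboolP => // Fg.
  case: (eqVneq (SL g) 0) => // /push_restr_nz ng; exfalso; apply: ng'.
  by rewrite -Fg -ng Fm_restr restrUK.
pose sF F : seq {classic M} := finmap.enum_fset (fset_set (fsupp (P F) : set {classic M})).
have msF : forall F (w : M), ((w : {classic M}) \in sF F) = (P F w != 0).
  move=> F w; rewrite /sF; have := @in_fset_set {classic M} (fsupp (P F)) (fP F) w.
  by move=> /= ->; apply/idP/idP => [/set_mem|H] //; apply: mem_set.
have usF : forall F, uniq (sF F) by move=> F; exact: finmap.fset_uniq.
pose d0 : M := fun _ => @dflt X Y.
pose G := fun F (w : M) => if `[< Fm w = restrU (face F) g' >] then P F w else 0.
pose T := tups d0 (enum A) sF.
have RHSE : \prod_(F in A) push (restrU (face F)) (push Fm S) (restrU (face F) g') =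
    \sum_(tau <- T) \prod_(F <- enum A) G F (tau F).
  rewrite -big_enum /= -prod_expand ?enum_uniq //; apply: eq_bigr => F _.
  have cF : forall w : M, P F w != 0 -> (w : {classic M}) \in sF F by move=> w; rewrite msF.
  by rewrite P'E (pushE Fm (usF F) cF).
rewrite RHSE.
have memT : forall tau : {classic ({set E} -> M)}, tau \in T <->
    ((forall F, F \in A -> P F (tau F) != 0) /\ (forall F, F \notin A -> tau F = d0)).
  move=> tau; rewrite /T mem_tups ?enum_uniq //.
  split => -[H1 H2]; split.
  - by move=> F FA; rewrite -msF; apply: H1; rewrite mem_enum.
  - by move=> F FA; apply: H2; rewrite mem_enum.
  - by move=> F; rewrite mem_enum msF; exact: H1.
  - by move=> F; rewrite mem_enum; exact: H2.
have normT : forall tau, tau \in T -> forall F, F \in A -> restrU (face F) (tau F) = tau F.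
  by move=> tau /memT [H1 _] F FA; apply: push_restr_nz; exact: H1.
have glueT : forall tau, tau \in T -> forall F, F \in A ->
    restrU (face F) (glue A tau) = tau F.
  by move=> tau tT F FA; apply: restr_glue => //; exact: normT.
have injT : {in T &, injective (fun tau : {classic ({set E} -> M)} => (glue A tau : {classic M}))}.
  move=> t1 t2 t1T t2T /= e; apply/funext => F.
  case: (boolP (F \in A)) => FA.
    by rewrite -(glueT _ t1T F FA) -(glueT _ t2T F FA) e.
  have [_ h1] := (memT t1).1 t1T; have [_ h2] := (memT t2).1 t2T; by rewrite h1 ?h2.
set H := fun g : M => if `[< Fm g = g' >] then SL g else 0.
have uT : uniq T by apply: uniq_tups => //; exact: enum_uniq.
have umT : uniq [seq (glue A tau : {classic M}) | tau <- T].
  by rewrite (map_inj_in_uniq injT).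
transitivity (\sum_(g <- [seq (glue A tau : {classic M}) | tau <- T]) H g).
  apply: sum_cov_eq => //.
  - by move=> g; rewrite /H; case: asboolP => _; rewrite ?eqxx // => /csL.
  move=> g; rewrite /H; case: asboolP => _; rewrite ?eqxx //.
  rewrite -/SL SLE.
  case: asboolP => ng; last by rewrite eqxx.
  move=> Pn; pose tau0 : {classic ({set E} -> M)} :=
    fun F => if F \in A then restrU (face F) g else d0.
  have t0T : tau0 \in T.
    apply/memT; split; last by move=> F /negbTE; rewrite /tau0 => ->.
    move=> F FA; rewrite /tau0 FA; apply: contraNneq Pn => e.
    by rewrite (bigD1 F) //= e mul0r.
  apply/(@mapP {classic ({set E} -> M)} {classic M}); exists tau0 => //.
  by rewrite /tau0 glue_tup0.
rewrite big_map; apply: eq_big_seq => tau tT.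
rewrite /H /G prod_if -/SL SLE.
set Z := restrU _ (glue A tau).
have -> : Z = glue A tau by exact: glue_norm.
rewrite (asboolT (erefl _)).
have -> : \prod_(F in A) P F (restrU (face F) (glue A tau)) = \prod_(F <- enum A) P F (tau F).
  by rewrite big_enum /=; apply: eq_bigr => F FA; rewrite glueT.
case: asboolP => h1; case: asboolP => h2 //; exfalso.
  apply: h2 => F; rewrite mem_enum => FA.
  by rewrite -(glueT _ tT F FA) -Fm_restr h1.
apply: h1; apply: norm_eq.
- by rewrite Fm_restr; congr Fm; exact: glue_norm.
- exact: ng'.
by move=> F FA; rewrite Fm_restr glueT // h2 // mem_enum.
Qed.



End Transfer.

Section Topo.

Lemma precomp_cont (X Xt Y : ptopologicalType) (k : Xt -> X) : continuous k ->
  continuous ((fun v : X -> Y => v \o k) : {compact-open, X -> Y} -> {compact-open, Xt -> Y}).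
Proof.
move=> ck f; apply: (iffRL (compact_open_cvgP _ _)) => [|K O cK oO fKO]; first by apply: fmap_filter; exact: nbhs_filter.
have cK' : compact (k @` K) by apply: continuous_compact => //; exact: continuous_subspaceT.
have oC := @compact_open_open X Y _ _ cK' oO.
have : nbhs (f : {compact-open, X -> Y}) [set g : {compact-open, X -> Y} | g @` (k @` K) `<=` O].
  apply: open_nbhs_nbhs; split => // y [_ [x Kx <-] <-]; apply: fKO; by exists x.
apply: filterS => g /= gO y [x Kx <-]; apply: gO; exists (k x) => //; by exists x.
Qed.

Lemma postcomp_cont (X Y Yt : ptopologicalType) (h : Y -> Yt) : continuous h ->
  continuous ((fun v : X -> Y => h \o v) : {compact-open, X -> Y} -> {compact-open, X -> Yt}).
Proof.
move=> ch f; apply: (iffRL (compact_open_cvgP _ _)) => [|K O cK oO fKO]; first by apply: fmap_filter; exact: nbhs_filter.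
have oO' : open (h @^-1` O) by apply: open_comp => // y _; exact: ch.
have oC := @compact_open_open X Y _ _ cK oO'.
have : nbhs (f : {compact-open, X -> Y}) [set g : {compact-open, X -> Y} | g @` K `<=` h @^-1` O].
  apply: open_nbhs_nbhs; split => // y [x Kx <-]; apply: fKO; by exists x.
apply: filterS => g /= gO y [x Kx <-]; apply: (gO (g x)); by exists x.
Qed.

End Topo.

Section Transfer2.
Variables (E : finType) (X Y X' Y' : ptopologicalType).
Variable (m : (X -> Y) -> (X' -> Y')).
Hypothesis md : m (@dflt X Y) = @dflt X' Y'.
Hypothesis mc : continuous (m : {compact-open, X -> Y} -> {compact-open, X' -> Y'}).
Hypothesis bm : forall v, bmaps v -> bmaps (m v).
Local Notation D := {ptws E -> RR}.
Local Notation M := (D -> (X -> Y)).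
Local Notation Fm := (@Fm E X Y X' Y' m).

Lemma within_comp (U : set D) (w : M) :
  {within U, continuous (fun t => (w t : {compact-open, X -> Y}))} ->
  {within U, continuous (fun t => (m (w t) : {compact-open, X' -> Y'}))}.
Proof. by move=> cw t; apply: (continuous_comp (cw t)); exact: mc. Qed.

Lemma pcomp_m (a v : X -> Y) : pcomp a v -> pcomp (m a) (m v).
Proof.
move=> [bv [g [cg [bg [g0 g1]]]]]; split; first exact: bm.
exists (fun t => (m (g t) : {compact-open, X' -> Y'})); split.
  by move=> t; apply: (continuous_comp (cg t)); exact: mc.
by split; [move=> t /bg; exact: bm | rewrite /= g0 g1].
Qed.

Lemma umaps_m (U : set D) (V : set (X -> Y)) (V' : set (X' -> Y')) (w : M) :
  (forall v, V v -> V' (m v)) -> umaps U V w -> umaps U V' (Fm w).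
Proof.
move=> VV [cw [wV wd]]; split; first exact: within_comp.
split; first by move=> t /wV /VV.
by move=> t /wd; rewrite /Fm => ->.
Qed.

Lemma in_filt_push (s : nat) (U : set D) (V : M -> int) :
  (forall R, @Fn D X' s.-1 U R -> exists R' (Phi : (option (D * X) -> Y) -> (option (D * X') -> Y')),
     @Fn D X s.-1 U R' /\ forall w, umaps U (@bmaps X Y) w ->
       restrZ R (sharp (Fm w)) = Phi (restrZ R' (sharp w))) ->
  in_filt s U V -> in_filt s U (push Fm V).
Proof.
move=> HR [fV HV]; split.
  apply: (in_free_push fV) => w; apply: umaps_m => v; exact: bm.
move=> R /HR [R' [Phi [FR' eR]]].
have fin := in_free_fin fV.
rewrite push_comp //.
rewrite (push_ext (g := Phi \o (fun w => restrZ R' (sharp w)))) //; last first.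
  by move=> w Vw; rewrite /= eR //; apply: (proj2 fV); exact: Vw.
by rewrite -push_comp // HV // push0.
Qed.

End Transfer2.

Lemma approx_m (X Y X' Y' : ptopologicalType) (m : (X -> Y) -> (X' -> Y'))
  (r : nat) (a b : X -> Y) :
  m (@dflt X Y) = @dflt X' Y' ->
  continuous (m : {compact-open, X -> Y} -> {compact-open, X' -> Y'}) ->
  (forall v, bmaps v -> bmaps (m v)) ->
  (forall (E : finType) R, @Fn {ptws E -> RR} X' r (@simplex E) R ->
     exists R' (Phi : (option ({ptws E -> RR} * X) -> Y) -> (option ({ptws E -> RR} * X') -> Y')),
     @Fn {ptws E -> RR} X r (@simplex E) R' /\ forall w, umaps (@simplex E) (@bmaps X Y) w ->
       restrZ R (sharp (Fm m w)) = Phi (restrZ R' (sharp w))) ->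
  r_approx r a b -> r_approx r (m a) (m b).
Proof.
move=> md mc bm HR H E E0; have [S [Sf [Sfis SF]]] := H E E0.
have fS := in_free_fin Sf.
exists (push (Fm m) S); split.
  apply: (in_free_push Sf) => w; apply: umaps_m => //; exact: pcomp_m.
split; first exact: fissile_push.
have -> : (fun w => gen (Xi (@simplex E) (m b)) w - push (Fm m) S w) =
    push (Fm m) (fun w => gen (Xi (@simplex E) b) w - S w).
  by rewrite push_gen_sub // Fm_Xi.
apply: in_filt_push => //; exact: HR.
Qed.

Lemma In_map_seq (A B : Type) (f : A -> B) (s : seq A) z :
  List.In z s -> List.In (f z) (map f s).
Proof. elim: s => [|x s IH] //= [->|/IH H]; [by left|by right]. Qed.

Lemma In_map_inv (A B : Type) (f : A -> B) (s : seq A) y :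
  List.In y (map f s) -> exists z, List.In z s /\ y = f z.
Proof.
elim: s => [|x s IH] //= [<-|/IH [z [zs ->]]]; first by exists x; split; [left|].
by exists z; split; [right|].
Qed.

Lemma HR_pre (X Xt Y : ptopologicalType) (k : Xt -> X) (r : nat) (E : finType) R :
  @Fn {ptws E -> RR} Xt r (@simplex E) R ->
  exists R' (Phi : (option ({ptws E -> RR} * X) -> Y) -> (option ({ptws E -> RR} * Xt) -> Y)),
     @Fn {ptws E -> RR} X r (@simplex E) R' /\ forall w, umaps (@simplex E) (@bmaps X Y) w ->
       restrZ R (sharp (Fm (fun v : X -> Y => v \o k) w)) = Phi (restrZ R' (sharp w)).
Proof.
move=> [Rw [RN [s [ss Rs]]]]; subst R.
pose phi (z : option ({ptws E -> RR} * Xt)) : option ({ptws E -> RR} * X) :=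
  match z with None => None
  | Some p => if `[< k p.2 = point >] then None else Some (p.1, k p.2) end.
exists [set z | List.In z (map phi s)].
exists (fun rho z => if `[< List.In z s >] then rho (phi z) else point).
split.
  split.
    move=> z /= zin; have [z0 [z0s ->]] := In_map_inv zin.
    have := Rw z0 z0s; case: z0 {z0s} => [[t x]|] /=; last by left.
    case=> [//|[[t' x'] /= [Ut xp] [<- <-]]].
    case: asboolP => kx; first by left.
    right; exists (t', k x') => //; split => //; exact/eqP.
  split; first exact: (In_map_seq phi RN).
  by exists (map phi s); rewrite size_map.
move=> w [_ [wb _]]; apply/funext => z; rewrite /restrZ /=.
case: asboolP => /= zs //.
rewrite asboolT /=; last exact: In_map_seq.
case: z zs => [[t x]|] zs //=.
have := Rw _ zs; case=> [//|[[t' x'] /= [Ut _] [<- <-]]].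
rewrite /Fm /=; case: asboolP => kx //=.
by rewrite kx; case: (wb t' Ut).
Qed.

Lemma HR_post (X Y Yt : ptopologicalType) (h : Y -> Yt) (r : nat) (E : finType) R :
  h point = point ->
  @Fn {ptws E -> RR} X r (@simplex E) R ->
  exists R' (Phi : (option ({ptws E -> RR} * X) -> Y) -> (option ({ptws E -> RR} * X) -> Yt)),
     @Fn {ptws E -> RR} X r (@simplex E) R' /\ forall w, umaps (@simplex E) (@bmaps X Y) w ->
       restrZ R (sharp (Fm (fun v : X -> Y => h \o v) w)) = Phi (restrZ R' (sharp w)).
Proof.
move=> hp FR; exists R, (fun rho => h \o rho); split => // w _.
apply/funext => z; rewrite /restrZ /=; case: asboolP => _ //.
by case: z.
Qed.
End Infra.

Unset Implicit Arguments.
Local Open Scope classical_set_scope.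

Theorem corollary5p1 (X Y Xt Yt : ptopologicalType) (r : nat)
    (k : Xt -> X) (h : Y -> Yt) (a b : X -> Y) :
  cellular X -> cellular Y -> cellular Xt -> cellular Yt ->
  compact [set: X] -> compact [set: Xt] ->
  bmaps k -> bmaps h -> bmaps a -> bmaps b ->
  r_approx r a b ->
  r_approx r (a \o k) (b \o k) /\ r_approx r (h \o a) (h \o b).
Proof.
move=> _ _ _ _ _ _ [ck kp] [ch hp] _ _ H; split.
- apply: (@approx_m X Y Xt Y (fun v : X -> Y => v \o k)) => //.
  + exact: precomp_cont.
  + move=> v [cv vp]; split; last by rewrite /= kp vp.
    by move=> x; apply: continuous_comp; [exact: ck | exact: cv].
  + move=> E R; exact: HR_pre.
- apply: (@approx_m X Y X Yt (fun v : X -> Y => h \o v)) => //.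
  + by apply/funext => x; rewrite /dflt /= hp.
  + exact: postcomp_cont.
  + move=> v [cv vp]; split; last by rewrite /= vp hp.
    by move=> x; apply: continuous_comp; [exact: cv | exact: ch].
  + move=> E R; exact: HR_post.
Qed.
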